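(* Let $k\ge 2$ and let $P=(p_1,\dots,p_k)$ and $Q=(q_1,\dots,q_k)$ be two multinomial (categorical) probability distributions over the same index set $\{1,\dots,k\}$. Suppose the indices of the largest probabilities of $P$ and $Q$ do not match, i.e. $\arg\max_i p_i \neq \arg\max_j q_j$. Then $$d_{KL}(Q,P)\;\ge\; -\log\bigl(2\sqrt{p_{(1)}p_{(2)}}+1-p_{(1)}-p_{(2)}\bigr),$$ where $p_{(1)}$ and $p_{(2)}$ denote the first and second largest probabilities among $p_1,\dots,p_k$.
   Context: The Kullback–Leibler divergence is $d_{KL}(Q,P)=\sum_{i=1}^k q_i\log\frac{q_i}{p_i}$ (with the usual conventions $0\log 0=0$, and $d_{KL}=+\infty$ if some $q_i>0=p_i$). *)

(* Defs.v *)
From HB Require Import structures.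
From mathcomp Require Import all_boot all_order all_algebra.
From mathcomp Require Import all_classical all_reals.
From mathcomp Require Import ereal sequences exp.
Set Implicit Arguments. Unset Strict Implicit. Unset Printing Implicit Defensive.
Import Order.TTheory GRing.Theory Num.Theory.
Local Open Scope ring_scope.
Local Open Scope ereal_scope.

Definition is_distr (R : realType) (k : nat) (p : 'I_k -> R) : Prop :=
  (forall i, (0 <= p i)%R) /\ (\sum_(i < k) p i)%R = 1%R.

Definition dKL (R : realType) (k : nat) (q p : 'I_k -> R) : \bar R :=
  if [exists i, (0 < q i)%R && (p i == 0%R)] then +oo
  else (\sum_(i < k) (if q i == 0%R then 0%R else q i * ln (q i / p i)))%:E.

Definition neglog (R : realType) (x : R) : \bar R :=
  if x == 0%R then +oo else (- ln x)%:E.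

Definition sorted_probs (R : realType) (k : nat) (p : 'I_k -> R) : seq R :=
  sort (fun x y : R => (y <= x)%R) [seq p i | i <- enum 'I_k].

Definition p_first (R : realType) (k : nat) (p : 'I_k -> R) : R :=
  nth 0%R (sorted_probs p) 0.
Definition p_second (R : realType) (k : nat) (p : 'I_k -> R) : R :=
  nth 0%R (sorted_probs p) 1.

Definition is_argmax (R : realType) (k : nat) (p : 'I_k -> R) (i : 'I_k) : Prop :=
  forall j, (p j <= p i)%R.

(* Main.v *)
Require Import Defs.
From HB Require Import structures.
From mathcomp Require Import all_boot all_order all_algebra.
From mathcomp Require Import all_classical all_reals.
From mathcomp Require Import ereal sequences exp.
From mathcomp Require Import ring lra.
Import Order.TTheory GRing.Theory Num.Theory.
Local Open Scope ring_scope.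

Lemma sorted_head_ge {R : realType} {x0 : R} {s y} :
  sorted (fun x y : R => y <= x) (x0 :: s) -> y \in s -> y <= x0.
Proof.
move=> hs ys.
have tr : transitive (fun x y : R => y <= x).
  by move=> a b c hab hbc; apply: le_trans hbc hab.
have := order_path_min tr hs.
by move/allP => /(_ y ys).
Qed.

Lemma sorted_second {R : realType} {x0 x1 : R} {rest a b L} :
  sorted (fun x y : R => y <= x) (x0 :: x1 :: rest) ->
  perm_eq (x0 :: x1 :: rest) (a :: b :: L) -> b <= a -> b <= x1.
Proof.
move=> hs hp ba.
have hs1 : sorted (fun x y : R => y <= x) (x1 :: rest).
  by move: hs => /= /andP[].
have in1 : forall y, y \in x1 :: rest -> y <= x1.
  move=> y; rewrite inE => /orP[/eqP -> //|]; exact: sorted_head_ge hs1.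
have [ea|na] := eqVneq a x0.
  move: hp; rewrite ea perm_cons => hp.
  apply: in1; by rewrite (perm_mem hp) mem_head.
have : a \in x0 :: x1 :: rest by rewrite (perm_mem hp) mem_head.
rewrite inE (negbTE na) /= => ain.
exact: le_trans ba (in1 _ ain).
Qed.

Lemma sorted_first {R : realType} {x0 : R} {rest a L} :
  sorted (fun x y : R => y <= x) (x0 :: rest) ->
  perm_eq (x0 :: rest) (a :: L) -> (forall y, y \in a :: L -> y <= a) -> x0 = a.
Proof.
move=> hs hp hmax.
apply/le_anti/andP; split.
  by apply: hmax; rewrite -(perm_mem hp) mem_head.
have : a \in x0 :: rest by rewrite (perm_mem hp) mem_head.
rewrite inE => /orP[/eqP -> //|]; exact: sorted_head_ge hs.
Qed.

Lemma split3 {R : realType} {k} (F : 'I_k -> R) {i j} : i != j ->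
  \sum_(l < k) F l = F i + F j + \sum_(l < k | (l != i) && (l != j)) F l.
Proof.
move=> ij.
rewrite (bigD1 i) //= (bigD1 j) /=; last by rewrite eq_sym.
by rewrite addrA.
Qed.
Lemma term_ge {R : realType} {q p w Z : R} : 0 <= q -> 0 <= p -> (0 < q -> 0 < p) ->
  0 < w -> 0 < Z ->
  q * ln w - q * ln Z + q - p * w / Z <= (if q == 0 then 0 else q * ln (q / p)).
Proof.
move=> q0 p0 qp w0 Z0.
have [->|qn0] := eqVneq q 0.
  rewrite !mul0r subrr !add0r oppr_le0.
  by apply: divr_ge0; [apply: mulr_ge0; [done| exact: ltW] | exact: ltW].
have qpos : 0 < q by rewrite lt_def qn0.
have ppos := qp qpos.
set x := ln w - ln Z - ln (q / p).
have := expR_ge1Dx x.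
have ex : expR x = w / Z * (p / q).
  rewrite /x !expRD !expRN !lnK ?posrE ?divr_gt0 //.
  by rewrite invf_div.
rewrite ex => h.
have h2 := ler_wpM2l (ltW qpos) h.
have e2 : q * (w / Z * (p / q)) = p * w / Z by field; rewrite ?qn0 ?gt_eqF.
rewrite e2 /x in h2.
lra.
Qed.

Local Open Scope ereal_scope.

Theorem mainTheorem1 (R : realType) (k : nat) (hk : (2 <= k)%N)
  (p q : 'I_k -> R) (hp : is_distr p) (hq : is_distr q)
  (hmax : exists i j : 'I_k, [/\ is_argmax p i, is_argmax q j & i != j]) :
  neglog (2 * Num.sqrt (p_first p * p_second p) + 1 - p_first p - p_second p)%R
    <= dKL q p.
Proof.
move: hmax => [i [j [hi hj ij]]].
case: hp => p0 p1; case: hq => q0 q1.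
have hperm : perm_eq (sorted_probs p)
    (p i :: p j :: [seq p l | l <- rem j (rem i (enum 'I_k))]).
  rewrite /sorted_probs perm_sort.
  have -> : (p i :: p j :: [seq p l | l <- rem j (rem i (enum 'I_k))])
     = [seq p l | l <- i :: j :: rem j (rem i (enum 'I_k))] by [].
  apply: perm_map.
  apply: perm_trans (perm_to_rem (mem_enum _ i)) _.
  rewrite perm_cons; apply: perm_to_rem.
  by apply: rem_mem; [rewrite eq_sym | rewrite mem_enum].
have hsort : sorted (fun x y : R => (y <= x)%R) (sorted_probs p).
  apply: sort_sorted => x y; exact: le_total.
have hmaxi : forall y, y \in p i :: p j :: [seq p l | l <- rem j (rem i (enum 'I_k))] -> (y <= p i)%R.
  move=> y; rewrite -(perm_mem hperm) /sorted_probs mem_sort => /mapP [l _ ->].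
  exact: hi.
rewrite /p_first /p_second.
move: hperm hsort hmaxi.
case: (sorted_probs p) => [|x0 [|x1 rest]].
- by move/perm_size.
- by move/perm_size.
move=> hperm hsort hmaxi /=.
have ex0 := sorted_first hsort hperm hmaxi.
have bx1 : (p j <= x1)%R by apply: (sorted_second hsort hperm); apply: hi.
have x1a : (x1 <= p i)%R.
  rewrite -ex0; apply: (sorted_head_ge hsort); exact: mem_head.
rewrite ex0.
have qj : (0 < q j)%R.
  rewrite lt_def q0 andbT; apply/negP => /eqP qj0.
  have : (\sum_(l < k) q l = 0)%R.
    apply: big1 => l _.
    by apply/le_anti; rewrite q0 andbT -qj0 hj.
  by rewrite q1 => /eqP; rewrite oner_eq0.
rewrite /dKL; case: ifP => [_|/negbT hne]; first exact: leey.
have hnz : forall l, (0 < q l)%R -> (0 < p l)%R.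
  move=> l ql; rewrite lt_def p0 andbT; apply/negP => /eqP pl.
  by move/existsP: hne; apply; exists l; rewrite ql pl eqxx.
set a := p i; set b := p j.
have b0 : (0 < b)%R by exact: hnz.
have ba : (b <= a)%R by apply: hi.
have a0 : (0 < a)%R by exact: lt_le_trans ba.
set rest_p := (\sum_(l < k | (l != i) && (l != j)) p l)%R.
have rp0 : (0 <= rest_p)%R by apply: sumr_ge0.
have psum : (a + b + rest_p = 1)%R by rewrite -p1 (split3 _ ij).
set s := Num.sqrt (a * b).
have s0 : (0 < s)%R by rewrite sqrtr_gt0 mulr_gt0.
have ss : (s * s = a * b)%R by rewrite -expr2 sqr_sqrtr // mulr_ge0 // ltW.
have sb : (b <= s)%R by nra.
set Z := (2 * s + 1 - a - b)%R.
have Z0 : (0 < Z)%R by rewrite /Z; lra.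
set w := fun l : 'I_k => if l == i then (s / a)%R else if l == j then (s / b)%R else 1%R.
have w0 : forall l, (0 < w l)%R.
  move=> l; rewrite /w; case: ifP => _; first by rewrite divr_gt0.
  by case: ifP => _; rewrite ?divr_gt0.
have wi : w i = (s / a)%R by rewrite /w eqxx.
have wj : w j = (s / b)%R by rewrite /w eq_sym (negbTE ij) eqxx.
have wr : forall l, (l != i) && (l != j) -> w l = 1%R.
  by move=> l /andP[/negbTE li /negbTE lj]; rewrite /w li lj.
have pw : (\sum_(l < k) p l * w l = Z)%R.
  rewrite (split3 _ ij) wi wj (eq_bigr _ (fun l hl => congr1 _ (wr l hl))).
  under eq_bigr do rewrite mulr1.
  have e1 : (a * (s / a) = s)%R by field; rewrite gt_eqF.
  have e2 : (b * (s / b) = s)%R by field; rewrite gt_eqF.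
  rewrite -/rest_p /Z e1 e2; lra.
have qw : (0 <= \sum_(l < k) q l * ln (w l))%R.
  rewrite (split3 _ ij) wi wj.
  under eq_bigr => l hl do rewrite wr // ln1 mulr0.
  rewrite big1 // addr0.
  have e : (s / a = (s / b)^-1)%R.
    have hb : b = (s * s / a)%R by rewrite ss; field; rewrite gt_eqF.
    by rewrite invf_div hb; field; rewrite !gt_eqF.
  rewrite e lnV ?posrE ?divr_gt0 //.
  have : (0 <= ln (s / b))%R by apply: ln_ge0; rewrite ler_pdivlMr // mul1r.
  have : (q i <= q j)%R by apply: hj.
  nra.
have main : (- ln Z <= \sum_(l < k) (if q l == 0%R then 0%R else q l * ln (q l / p l)))%R.
  have H := ler_sum (index_enum 'I_k) (P := xpredT) (fun l _ => term_ge (q0 l) (p0 l) (@hnz l) (w0 l) Z0).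
  apply: le_trans H.
  rewrite sumrB big_split /= sumrB /= -mulr_suml q1 mul1r.
  rewrite -mulr_suml pw divff ?gt_eqF //.
  lra.
have x10 : (0 < x1)%R by exact: lt_le_trans bx1.
set X := (2 * Num.sqrt (a * x1) + 1 - a - x1)%R.
have ZX : (Z <= X)%R.
  have a0' := ltW a0.
  rewrite /X /Z /s !sqrtrM //.
  have ha := sqr_sqrtr (ltW a0).
  have hb := sqr_sqrtr (ltW b0).
  have hc := sqr_sqrtr (ltW x10).
  have h1 : (Num.sqrt b <= Num.sqrt x1)%R by rewrite ler_sqrt; [exact: bx1| exact: ltW x10].
  have h2 : (Num.sqrt x1 <= Num.sqrt a)%R by rewrite ler_sqrt; [exact: x1a| exact: ltW a0].
  have h3 := sqrtr_ge0 b.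
  rewrite !expr2 in ha hb hc.
  have h4 : (0 <= (Num.sqrt x1 - Num.sqrt b) * (2 * Num.sqrt a - Num.sqrt b - Num.sqrt x1))%R.
    apply: mulr_ge0; lra.
  nra.
have X0 : (0 < X)%R by exact: lt_le_trans ZX.
rewrite /neglog (gt_eqF X0) lee_fin.
apply: le_trans main.
by rewrite lerN2 ler_ln ?posrE.
Qed.
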